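(* For every integer $n$, \[ \sum_{k=1}^n L_k^{\,4}=5F_{2n+1}F_{n-1}F_{n+2}+6n-5\,. \]
   Context: $F_i$ and $L_i$ denote the Fibonacci and Lucas numbers, defined for all $i\in\mathbb{Z}$ by $F_i=F_{i-1}+F_{i-2}$, $F_0=0$, $F_1=1$, and $L_i=L_{i-1}+L_{i-2}$, $L_0=2$, $L_1=1$; equivalently $F_{-i}=(-1)^{i-1}F_i$ and $L_{-i}=(-1)^iL_i$. Summation convention for an arbitrary integer upper limit: $\sum_{k=a}^{a-1} f(k)=0$, and for $n<a-1$, $\sum_{k=a}^{n} f(k) = -\sum_{k=n+1}^{a-1} f(k)$. *)

(* Defs.v *)
From Stdlib Require Import ZArith Lia.
Open Scope Z_scope.

Fixpoint fib_nat (n : nat) : Z :=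
  match n with
  | O => 0
  | S O => 1
  | S ((S m) as p) => fib_nat p + fib_nat m
  end.

Fixpoint luc_nat (n : nat) : Z :=
  match n with
  | O => 2
  | S O => 1
  | S ((S m) as p) => luc_nat p + luc_nat m
  end.

Definition F (i : Z) : Z :=
  if 0 <=? i then fib_nat (Z.to_nat i)
  else (-1) ^ (- i - 1) * fib_nat (Z.to_nat (- i)).

Definition L (i : Z) : Z :=
  if 0 <=? i then luc_nat (Z.to_nat i)
  else (-1) ^ (- i) * luc_nat (Z.to_nat (- i)).

Fixpoint sum_from (f : Z -> Z) (a : Z) (m : nat) : Z :=
  match m with
  | O => 0
  | S m' => sum_from f a m' + f (a + Z.of_nat m')
  end.

(* sum_{k=a}^{n} f k with the convention: 0 if n = a-1,
   and - sum_{k=n+1}^{a-1} f k if n < a-1. *)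
Definition zsum (f : Z -> Z) (a n : Z) : Z :=
  if a - 1 <=? n then sum_from f a (Z.to_nat (n - a + 1))
  else - sum_from f (n + 1) (Z.to_nat (a - 1 - n)).

Example F_test : F (-3) = 2 /\ F (-4) = -3 /\ F 10 = 55 /\ L (-3) = -4 /\ L 4 = 7. 
Proof. vm_compute; auto. Qed.
Example S_test : zsum (fun k => L k ^ 4) 1 3 = 1 + 81 + 256 /\ zsum (fun k => L k ^ 4) 1 (-2) = - (16 + 1).
Proof. vm_compute; auto. Qed.

(* Main.v *)
Require Import Defs.
From Stdlib Require Import ZArith.
From Stdlib Require Import Lia.
Open Scope Z_scope.

Lemma F_neg (m : nat) : F (- Z.of_nat m) = (-1) ^ (Z.of_nat m + 1) * fib_nat m.
Proof.
  destruct m as [|m]. { reflexivity. }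
  unfold F. destruct (0 <=? - Z.of_nat (S m)) eqn:E. { apply Z.leb_le in E; lia. }
  replace (- - Z.of_nat (S m) - 1) with (Z.of_nat m) by lia.
  replace (Z.to_nat (- - Z.of_nat (S m))) with (S m) by lia.
  replace (Z.of_nat (S m) + 1) with (Z.of_nat m + 2) by lia.
  rewrite Z.pow_add_r by lia. ring.
Qed.

Lemma F_nat (m : nat) : F (Z.of_nat m) = fib_nat m.
Proof. unfold F. destruct (0 <=? Z.of_nat m) eqn:E; [|apply Z.leb_gt in E; lia].
  now rewrite Nat2Z.id. Qed.

Lemma L_neg (m : nat) : L (- Z.of_nat m) = (-1) ^ (Z.of_nat m) * luc_nat m.
Proof.
  destruct m as [|m]. { reflexivity. }
  unfold L. destruct (0 <=? - Z.of_nat (S m)) eqn:E. { apply Z.leb_le in E; lia. }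
  replace (- - Z.of_nat (S m)) with (Z.of_nat (S m)) by lia.
  now rewrite Nat2Z.id.
Qed.

Lemma L_nat (m : nat) : L (Z.of_nat m) = luc_nat m.
Proof. unfold L. destruct (0 <=? Z.of_nat m) eqn:E; [|apply Z.leb_gt in E; lia].
  now rewrite Nat2Z.id. Qed.

Lemma F_rec (i : Z) : F (i + 2) = F (i + 1) + F i.
Proof.
  destruct (Z_le_gt_dec 0 i).
  - replace i with (Z.of_nat (Z.to_nat i)) by lia. set (m := Z.to_nat i).
    replace (Z.of_nat m + 2) with (Z.of_nat (S (S m))) by lia.
    replace (Z.of_nat m + 1) with (Z.of_nat (S m)) by lia.
    rewrite !F_nat. reflexivity.
  - destruct (Z.eq_dec i (-1)). { subst. reflexivity. }
    set (m := Z.to_nat (- i - 2)).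
    replace (i + 2) with (- Z.of_nat m) by lia.
    replace (i + 1) with (- Z.of_nat (S m)) by lia.
    replace i with (- Z.of_nat (S (S m))) by lia.
    rewrite !F_neg. rewrite !Nat2Z.inj_succ.
    change (fib_nat (S (S m))) with (fib_nat (S m) + fib_nat m).
    replace (Z.succ (Z.of_nat m) + 1) with (Z.succ (Z.of_nat m + 1)) by lia.
    replace (Z.succ (Z.succ (Z.of_nat m)) + 1) with (Z.succ (Z.succ (Z.of_nat m + 1))) by lia.
    rewrite !Z.pow_succ_r by lia. ring.
Qed.

Lemma L_rec (i : Z) : L (i + 2) = L (i + 1) + L i.
Proof.
  destruct (Z_le_gt_dec 0 i).
  - replace i with (Z.of_nat (Z.to_nat i)) by lia. set (m := Z.to_nat i).
    replace (Z.of_nat m + 2) with (Z.of_nat (S (S m))) by lia.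
    replace (Z.of_nat m + 1) with (Z.of_nat (S m)) by lia.
    rewrite !L_nat. reflexivity.
  - destruct (Z.eq_dec i (-1)). { subst. reflexivity. }
    set (m := Z.to_nat (- i - 2)).
    replace (i + 2) with (- Z.of_nat m) by lia.
    replace (i + 1) with (- Z.of_nat (S m)) by lia.
    replace i with (- Z.of_nat (S (S m))) by lia.
    rewrite !L_neg. rewrite !Nat2Z.inj_succ.
    change (luc_nat (S (S m))) with (luc_nat (S m) + luc_nat m).
    rewrite !Z.pow_succ_r by lia. ring.
Qed.

Lemma Z_ind2 (P : Z -> Prop) :
  P 0 -> P 1 -> (forall i, P i -> P (i + 1) -> P (i + 2)) ->
  (forall i, P (i + 1) -> P (i + 2) -> P i) -> forall i, P i.
Proof.
  intros H0 H1 Hu Hd.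
  assert (A : forall m : nat, P (Z.of_nat m) /\ P (Z.of_nat m + 1)).
  { induction m as [|m [IH1 IH2]]. { split; assumption. }
    split. { replace (Z.of_nat (S m)) with (Z.of_nat m + 1) by lia; auto. }
    replace (Z.of_nat (S m) + 1) with (Z.of_nat m + 2) by lia; auto. }
  assert (B : forall m : nat, P (- Z.of_nat m) /\ P (- Z.of_nat m + 1)).
  { induction m as [|m [IH1 IH2]]. { split; assumption. }
    split.
    - apply Hd; replace (- Z.of_nat (S m) + 1) with (- Z.of_nat m) by lia;
      replace (- Z.of_nat (S m) + 2) with (- Z.of_nat m + 1) by lia; auto.
    - replace (- Z.of_nat (S m) + 1) with (- Z.of_nat m) by lia; auto. }
  intros i. destruct (Z_le_gt_dec 0 i).
  - replace i with (Z.of_nat (Z.to_nat i)) by lia. apply A.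
  - replace i with (- Z.of_nat (Z.to_nat (- i))) by lia. apply B.
Qed.

Lemma L_F (k : Z) : L k = F (k - 1) + F (k + 1).
Proof.
  apply (Z_ind2 (fun k => L k = F (k - 1) + F (k + 1))); try reflexivity.
  - intros i H1 H2. rewrite L_rec, H1, H2.
    replace (i + 2 - 1) with (i - 1 + 2) by lia. rewrite F_rec.
    replace (i + 2 + 1) with (i + 1 + 2) by lia. rewrite F_rec.
    replace (i - 1 + 1) with i by lia. replace (i + 1 + 1) with (i + 2) by lia.
    replace (i + 1 - 1) with i by lia. ring.
  - intros i H1 H2. assert (E := L_rec i).
    replace (i + 2 - 1) with (i + 1) in H2 by lia.
    replace (i + 1 - 1) with i in H1 by lia.
    replace (i + 1 + 1) with (i + 2) in H1 by lia.
    assert (E1 := F_rec (i - 1)). replace (i - 1 + 2) with (i + 1) in E1 by lia.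
    replace (i - 1 + 1) with i in E1 by lia.
    assert (E2 := F_rec (i + 1)). replace (i + 1 + 2) with (i + 3) in E2 by lia.
    replace (i + 1 + 1) with (i + 2) in E2 by lia.
    replace (i + 2 + 1) with (i + 3) in H2 by lia.
    assert (E3 := F_rec i). lia.
Qed.

Lemma F_add (m n : Z) : F (m + n + 1) = F (m + 1) * F (n + 1) + F m * F n.
Proof.
  revert m. apply Z_ind2.
  - replace (0 + n + 1) with (n + 1) by lia. change (F (0 + 1)) with 1. change (F 0) with 0. ring.
  - replace (1 + n + 1) with (n + 2) by lia. rewrite F_rec.
    change (F (1+1)) with 1. change (F 1) with 1. ring.
  - intros i H1 H2. replace (i + 2 + n + 1) with ((i + n + 1) + 2) by lia.
    rewrite F_rec. replace (i + n + 1 + 1) with (i + 1 + n + 1) by lia.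
    rewrite H1, H2. replace (i + 2 + 1) with (i + 1 + 2) by lia.
    rewrite !F_rec. replace (i + 1 + 1) with (i + 2) by lia. rewrite F_rec. ring.
  - intros i H1 H2.
    replace (i + 2 + n + 1) with ((i + n + 1) + 2) in H2 by lia.
    rewrite F_rec in H2. replace (i + n + 1 + 1) with (i + 1 + n + 1) in H2 by lia.
    rewrite H1 in H2. replace (i + 2 + 1) with (i + 1 + 2) in H2 by lia.
    rewrite !F_rec in H2. replace (i + 1 + 1) with (i + 2) in H2 by lia.
    rewrite F_rec in H2. lia.
Qed.

Definition Q (n : Z) := F (n + 1) ^ 2 - F (n + 1) * F n - F n ^ 2.

Lemma Q_sq (n : Z) : Q n ^ 2 = 1.
Proof.
  assert (H : forall n, Q (n + 1) = - Q n).
  { intros k. unfold Q. replace (k + 1 + 1) with (k + 2) by lia. rewrite F_rec. ring. }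
  revert n. apply Z_ind2; try reflexivity.
  - intros i _ H2. replace (i + 2) with (i + 1 + 1) by lia. rewrite H. replace ((- Q (i + 1)) ^ 2) with (Q (i + 1) ^ 2) by ring. exact H2.
  - intros i _ H2. replace (i + 2) with (i + 1 + 1) in H2 by lia. rewrite !H in H2.
    replace ((- - Q i) ^ 2) with (Q i ^ 2) in H2 by ring. exact H2.
Qed.

Lemma sum_from_shift f a m : sum_from f a (S m) = f a + sum_from f (a + 1) m.
Proof.
  induction m as [|m IH]. { simpl. replace (a + 0) with a by lia. ring. }
  change (sum_from f a (S (S m))) with (sum_from f a (S m) + f (a + Z.of_nat (S m))).
  rewrite IH. simpl. replace (a + 1 + Z.of_nat m) with (a + Z.pos (Pos.of_succ_nat m)) by lia.
  ring.
Qed.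

Lemma sum_S f a m : sum_from f a (S m) = sum_from f a m + f (a + Z.of_nat m).
Proof. reflexivity. Qed.

Lemma zsum_step f n : zsum f 1 n - zsum f 1 (n - 1) = f n.
Proof.
  unfold zsum.
  destruct (Z_le_gt_dec 1 n).
  - rewrite (proj2 (Z.leb_le _ _)) by lia. rewrite (proj2 (Z.leb_le _ _)) by lia.
    replace (Z.to_nat (n - 1 + 1)) with (S (Z.to_nat (n - 1 - 1 + 1))) by lia.
    rewrite sum_S. replace (1 + Z.of_nat (Z.to_nat (n - 1 - 1 + 1))) with n by lia. ring.
  - destruct (Z.eq_dec n 0).
    + subst. simpl. ring.
    + rewrite (proj2 (Z.leb_gt _ _)) by lia. rewrite (proj2 (Z.leb_gt _ _)) by lia.
      replace (Z.to_nat (1 - 1 - (n - 1))) with (S (Z.to_nat (1 - 1 - n))) by lia.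
      rewrite sum_from_shift. replace (n - 1 + 1) with n by lia. ring.
Qed.

Theorem corollary2 (n : Z) :
  zsum (fun k => L k ^ 4) 1 n
  = 5 * F (2 * n + 1) * F (n - 1) * F (n + 2) + 6 * n - 5.
Proof.
  set (R := fun n => 5 * F (2 * n + 1) * F (n - 1) * F (n + 2) + 6 * n - 5).
  change (zsum (fun k => L k ^ 4) 1 n = R n).
  assert (D : forall n, R n - R (n - 1) = L n ^ 4).
  { intros k. unfold R.
    rewrite L_F.
    assert (E1 : F (2 * k + 1) = F (k + 1) * F (k + 1) + F k * F k).
    { rewrite <- F_add. f_equal. lia. }
    assert (E2 : F (2 * (k - 1) + 1) = F k * F k + F (k - 1) * F (k - 1)).
    { replace (2 * (k - 1) + 1) with ((k - 1) + (k - 1) + 1) by lia. rewrite F_add.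
      replace (k - 1 + 1) with k by lia. ring. }
    rewrite E1, E2.
    assert (A1 := F_rec (k - 1)). replace (k - 1 + 2) with (k + 1) in A1 by lia.
    replace (k - 1 + 1) with k in A1 by lia.
    assert (A2 := F_rec k). replace (k - 1 + 2) with (k + 1) by lia.
    assert (A3 := F_rec (k - 2)). replace (k - 2 + 2) with k in A3 by lia.
    replace (k - 2 + 1) with (k - 1) in A3 by lia.
    replace (k - 1 - 1) with (k - 2) by lia.
    assert (HQ := Q_sq (k - 1)). unfold Q in HQ. replace (k - 1 + 1) with k in HQ by lia.
    rewrite A2, A1. rewrite A1 in A2.
    assert (B : F (k - 2) = F k - F (k - 1)) by lia. rewrite B.
    set (a := F (k - 1)) in *. set (b := F k) in *.
    assert (C : (b ^ 2 - b * a - a ^ 2) ^ 2 - 1 = 0) by lia.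
    transitivity ((a + (b + a)) ^ 4 + (-6) * ((b ^ 2 - b * a - a ^ 2) ^ 2 - 1)).
    + ring.
    + rewrite C. ring. }
  assert (D2 : forall k, zsum (fun k => L k ^ 4) 1 k - zsum (fun k => L k ^ 4) 1 (k - 1)
                        = R k - R (k - 1)).
  { intros k. rewrite D, zsum_step. reflexivity. }
  revert n. apply Z_ind2.
  - reflexivity.
  - reflexivity.
  - intros i H1 H2. specialize (D2 (i + 2)). replace (i + 2 - 1) with (i + 1) in D2 by lia. lia.
  - intros i H1 H2. specialize (D2 (i + 1)). replace (i + 1 - 1) with i in D2 by lia. lia.
Qed.
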